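(* For every integer $m\ge0$ and $n\ge0$, $$x^n=\sum_{k=0}^{\lfloor n/2\rfloor}\frac{[n]!}{[k]!\,[n-2k]!}\,\frac{[n+m-2k]!}{[n+m-k]!}\,\frac{q^ks^k}{(-q;q)_k\,(-q^{n+m+1-2k};q)_k}\,v_{n-2k}(x,m,s,q).$$ Consequently, if $\Phi_{m,q}$ is the linear functional on polynomials in $x$ determined by $\Phi_{m,q}(v_n(x,m,1,q))=[n=0]$ for all $n\ge 0$, then $\Phi_{m,q}(x^{2n+1})=0$ and $$\Phi_{m,q}(x^{2n})=\frac{q^n}{(-q;q)_n\,(-q^{m+1};q)_n}\cdot\frac{[2n]!\,[m]!}{[n]!\,[m+n]!}\quad(n\ge0).$$
   Context: $q$ is an indeterminate; $[n]=\frac{1-q^n}{1-q}$, $[n]!=[1]\cdots[n]$, $[0]!=1$, $(a;q)_n=(1-a)(1-qa)\cdots(1-q^{n-1}a)$, $(a;q)_0=1$. For an integer $m\ge 0$ and indeterminates $x,s$, $$v_n(x,m,s,q)=\sum_{k=0}^{\lfloor n/2\rfloor}(-s)^kq^{k^2}\frac{[n]!}{[k]!\,[n-2k]!}\,\frac{[m+n-k-1]!}{[m+n-1]!}\,\frac{1}{(-q;q)_k\,(-q^{n+m-k};q)_k}\,x^{n-2k}\quad(n\ge1),\qquad v_0=1.$$ $[P]$ is the Iverson bracket. *)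

(* Defs.v *)
From HB Require Import structures.
From mathcomp Require Import all_boot all_order all_algebra.
Set Implicit Arguments. Unset Strict Implicit. Unset Printing Implicit Defensive.
Import Order.TTheory GRing.Theory Num.Theory.
Local Open Scope ring_scope.

Section QDefs.
Variable F : fieldType.
Variable q : F.

Definition qint (n : nat) : F := \sum_(i < n) q ^+ i.
Definition qfact (n : nat) : F := \prod_(i < n) qint i.+1.
Definition qpoch (a : F) (n : nat) : F := \prod_(i < n) (1 - q ^+ i * a).

Definition vpoly (m : nat) (s : F) (n : nat) : {poly F} :=
  if n is 0 then 1 else
  \sum_(k < n./2.+1)
    ((- s) ^+ k * q ^+ (k * k)
      * (qfact n / (qfact k * qfact (n - 2 * k)))
      * (qfact (m + n - k - 1) / qfact (m + n - 1))
      / (qpoch (- q) k * qpoch (- q ^+ (n + m - k)) k))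
    *: 'X ^+ (n - 2 * k).

End QDefs.

(* Main.v *)
Set Warnings "-notation-overridden,-ambiguous-paths,-notation-incompatible-prefix".
Require Import Defs.
From HB Require Import structures.
From mathcomp Require Import all_boot all_order all_algebra.
From mathcomp Require Import ring zify.
Import Order.TTheory GRing.Theory Num.Theory.
Local Open Scope ring_scope.
Lemma qfactS (F : fieldType) (q : F) j : qfact q j.+1 = qfact q j * qint q j.+1.
Proof. by rewrite /qfact big_ord_recr. Qed.
Lemma qfact0 (F : fieldType) (q : F) : qfact q 0 = 1.
Proof. by rewrite /qfact big_ord0. Qed.
Lemma qint1 (F : fieldType) (q : F) : qint q 1 = 1.
Proof. by rewrite /qint big_ord1 expr0. Qed.
Lemma qfact1 (F : fieldType) (q : F) : qfact q 1 = 1.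
Proof. by rewrite qfactS qfact0 qint1 mul1r. Qed.
Lemma qintE (F : fieldType) (q : F) j : q != 1 -> qint q j = (1 - q ^+ j) / (1 - q).
Proof.
move=> h; rewrite /qint.
have h' : 1 - q != 0 by rewrite subr_eq0 eq_sym.
apply: (mulIf h'); rewrite mulfVK //.
by rewrite -(opprB (q ^+ j)) subrX1 -mulNr opprB mulrC.
Qed.
Lemma qpochS (F : fieldType) (q : F) a k : qpoch q a k.+1 = qpoch q a k * (1 - q ^+ k * a).
Proof. by rewrite /qpoch big_ord_recr. Qed.
Lemma qpochSl (F : fieldType) (q : F) a k : qpoch q a k.+1 = (1 - a) * qpoch q (q * a) k.
Proof.
rewrite /qpoch big_ord_recl expr0 mul1r; congr (_ * _).
by apply: eq_bigr => i _; rewrite lift0 exprSr -mulrA [q * a]mulrC mulrA.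
Qed.
Lemma qpoch0 (F : fieldType) (q : F) a : qpoch q a 0 = 1.
Proof. by rewrite /qpoch big_ord0. Qed.
Lemma qpoch1 (F : fieldType) (q : F) a : qpoch q a 1 = 1 - a.
Proof. by rewrite qpochS qpoch0 expr0 mul1r mul1r. Qed.

Section NZ.
Variables (F : fieldType) (q : F) (hq : forall j : nat, (0 < j)%N -> q ^+ j != 1).
Lemma q1neq0 j : (0 < j)%N -> 1 - q ^+ j != 0.
Proof. by move=> /hq h; rewrite subr_eq0 eq_sym. Qed.
Lemma qneq1 : q != 1.
Proof. by have := hq 1 isT; rewrite expr1. Qed.
Lemma qint_neq0 j : (0 < j)%N -> qint q j != 0.
Proof.
move=> hj; rewrite qintE ?qneq1 // mulf_neq0 ?invr_eq0 ?q1neq0 //.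
by have := q1neq0 1 isT; rewrite expr1.
Qed.
Lemma qfact_neq0 j : qfact q j != 0.
Proof. by rewrite /qfact; apply/prodf_neq0 => i _; apply: qint_neq0. Qed.
Lemma q1pneq0 j : (0 < j)%N -> 1 + q ^+ j != 0.
Proof.
move=> hj; apply/negP => /eqP h.
have : q ^+ (j * 2) == 1.
  rewrite exprM; have -> : q ^+ j = -1 by apply/eqP; rewrite -subr_eq0 opprK addrC h.
  by rewrite sqrrN expr1n.
by rewrite (negbTE (hq _ _)) // muln_gt0 hj.
Qed.
Lemma qpoch_neq0 j i : (0 < j)%N -> qpoch q (- q ^+ j) i != 0.
Proof.
move=> hj; rewrite /qpoch; apply/prodf_neq0 => k _.
by rewrite mulrN opprK -exprD q1pneq0 // addn_gt0 hj orbT.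
Qed.
Lemma qpochq_neq0 i : qpoch q (- q) i != 0.
Proof. by have := qpoch_neq0 1 i isT; rewrite expr1. Qed.
End NZ.
Lemma qpochNS (F : fieldType) (q : F) j k :
  qpoch q (- q ^+ j) k.+1 = (1 + q ^+ j) * qpoch q (- q ^+ j.+1) k.
Proof. by rewrite qpochSl opprK mulrN -exprS. Qed.
Lemma qpochNSr (F : fieldType) (q : F) j k :
  qpoch q (- q ^+ j) k.+1 = qpoch q (- q ^+ j) k * (1 + q ^+ (k + j)).
Proof. by rewrite qpochS mulrN opprK exprD. Qed.
Lemma qpochN_shift (F : fieldType) (q : F) (hq : forall j : nat, (0 < j)%N -> q ^+ j != 1) j k :
  (0 < j)%N ->
  qpoch q (- q ^+ j) k = (1 + q ^+ j) * qpoch q (- q ^+ j.+1) k / (1 + q ^+ (k + j)).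
Proof.
move=> hj; rewrite -qpochNS qpochNSr mulfK // q1pneq0 //; lia.
Qed.
Lemma qpochq1 (F : fieldType) (q : F) k : qpoch q (- q) k = qpoch q (- q ^+ 1) k.
Proof. by rewrite expr1. Qed.
Lemma q1neq0' (F : fieldType) (q : F) (hq : forall j : nat, (0 < j)%N -> q ^+ j != 1) : 1 - q != 0.
Proof. by have := @q1neq0 _ _ hq 1 isT; rewrite expr1. Qed.
Lemma q1pneq0' (F : fieldType) (q : F) (hq : forall j : nat, (0 < j)%N -> q ^+ j != 1) : 1 + q != 0.
Proof. by have := @q1pneq0 _ _ hq 1 isT; rewrite expr1. Qed.
Ltac nzq hq :=
  rewrite ?mulrN ?opprK;
  repeat (rewrite -exprD || rewrite -exprS || rewrite -exprSr);
  first [ exact: (@q1neq0' _ _ hq) | exact: (@q1pneq0' _ _ hq)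
        | apply: (@q1pneq0 _ _ hq); lia | apply: (@q1neq0 _ _ hq); lia
        | exact: (@qfact_neq0 _ _ hq) | apply: (@qpoch_neq0 _ _ hq); lia
        | exact: (@qpochq_neq0 _ _ hq) | exact: oner_neq0 ].
Set Implicit Arguments. Unset Strict Implicit.
Definition coefv (F : fieldType) (q : F) (m : nat) (s : F) (N k : nat) : F :=
  ((- s) ^+ k * q ^+ (k * k)
      * (qfact q N / (qfact q k * qfact q (N - 2 * k)))
      * (qfact q (m + N - k - 1) / qfact q (m + N - 1))
      / (qpoch q (- q) k * qpoch q (- q ^+ (N + m - k)) k)).
Definition Av (F : fieldType) (q : F) (m : nat) (s : F) (N k : nat) : F :=
  if (2 * k <= N)%N then (if N is 0 then 1 else coefv q m s N k) else 0.
Definition lam (F : fieldType) (q : F) (m : nat) (s : F) (N : nat) : F :=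
  Av q m s N 1 - Av q m s N.+1 1.
Definition coefc (F : fieldType) (q : F) (m : nat) (s : F) (n k : nat) : F :=
  ((qfact q n / (qfact q k * qfact q (n - 2 * k)))
        * (qfact q (n + m - 2 * k) / qfact q (n + m - k))
        * (q ^+ k * s ^+ k
           / (qpoch q (- q) k * qpoch q (- q ^+ (n + m + 1 - 2 * k)) k))).
Definition Cc (F : fieldType) (q : F) (m : nat) (s : F) (n k : nat) : F :=
  if (2 * k <= n)%N then coefc q m s n k else 0.
Lemma AvE (F : fieldType) (q : F) m s N k : (2 * k <= N.+1)%N -> Av q m s N.+1 k = coefv q m s N.+1 k.
Proof. by rewrite /Av => ->. Qed.
Lemma Av0 (F : fieldType) (q : F) m s N k : (N < 2 * k)%N -> Av q m s N k = 0.
Proof. by move=> h; rewrite /Av leqNgt h. Qed.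
Lemma CcE (F : fieldType) (q : F) m s N k : (2 * k <= N)%N -> Cc q m s N k = coefc q m s N k.
Proof. by rewrite /Cc => ->. Qed.
Lemma Cc0 (F : fieldType) (q : F) m s N k : (N < 2 * k)%N -> Cc q m s N k = 0.
Proof. by move=> h; rewrite /Cc leqNgt h. Qed.
Lemma R1 (F : fieldType) (q : F) (hq : forall j : nat, (0 < j)%N -> q ^+ j != 1) m s p k :
  Av q m s (p + k + k).+2 k.+1 =
  Av q m s (p + k + k).+3 k.+1 + lam q m s (p + k + k).+2 * Av q m s (p + k + k).+1 k.
Proof.
rewrite /lam.
do 5 (rewrite AvE; last lia).
rewrite /coefv.
have -> : (m + (p + k + k).+2 - 1 - 1 = m + p + k + k)%N by lia.
have -> : (m + (p + k + k).+3 - 1 - 1 = (m + p + k + k).+1)%N by lia.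
have -> : ((p + k + k).+2 - 2 * k.+1 = p)%N by lia.
have -> : (m + (p + k + k).+2 - k.+1 - 1 = m + p + k)%N by lia.
have -> : (m + (p + k + k).+2 - 1 = (m + p + k + k).+1)%N by lia.
have -> : ((p + k + k).+2 + m - k.+1 = (m + p + k).+1)%N by lia.
have -> : ((p + k + k).+3 - 2 * k.+1 = p.+1)%N by lia.
have -> : (m + (p + k + k).+3 - k.+1 - 1 = (m + p + k).+1)%N by lia.
have -> : (m + (p + k + k).+3 - 1 = (m + p + k + k).+2)%N by lia.
have -> : ((p + k + k).+3 + m - k.+1 = (m + p + k).+2)%N by lia.
have -> : ((p + k + k).+2 - 2 * 1 = p + k + k)%N by lia.
have -> : ((p + k + k).+2 + m - 1 = (m + p + k + k).+1)%N by lia.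
have -> : ((p + k + k).+3 - 2 * 1 = (p + k + k).+1)%N by lia.
have -> : ((p + k + k).+3 + m - 1 = (m + p + k + k).+2)%N by lia.
have -> : ((p + k + k).+1 - 2 * k = p.+1)%N by lia.
have -> : (m + (p + k + k).+1 - k - 1 = m + p + k)%N by lia.
have -> : (m + (p + k + k).+1 - 1 = m + p + k + k)%N by lia.
have -> : ((p + k + k).+1 + m - k = (m + p + k).+1)%N by lia.
rewrite !qfactS qfact0 qint1 !qpoch1.
rewrite (qpochNS _ _ (m + p + k).+1) (qpochNSr _ _ (m + p + k).+2).
rewrite (@qpochN_shift F q hq (m + p + k).+1 k) // qpochS.
have q1 := @qneq1 _ _ hq.
have qiE : forall j, qint q j = (1 - q ^+ j) / (1 - q) := fun j => @qintE _ q j q1.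
rewrite !qiE.
have -> : (k.+1 * k.+1 = k * k + k + k + 1)%N by lia.
rewrite !mul1n; rewrite ?(exprS, exprD, expr0, expr1).
set x := q ^+ p; set y := q ^+ k; set z := q ^+ m; set w := q ^+ (k * k); set S := (- s) ^+ k.
field.
rewrite /x /y /z.
repeat (apply/andP; split); nzq hq.
Qed.
Lemma R2 (F : fieldType) (q : F) (hq : forall j : nat, (0 < j)%N -> q ^+ j != 1) m s k :
  Av q m s (k + k).+4 k.+2 + lam q m s (k + k).+3 * Av q m s (k + k).+2 k.+1 = 0.
Proof.
rewrite /lam.
do 4 (rewrite AvE; last lia).
rewrite /coefv.
have -> : (m + (k + k).+3 - 1 - 1 = (m + k + k).+1)%N by lia.
have -> : (m + (k + k).+4 - 1 - 1 = (m + k + k).+2)%N by lia.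
have -> : ((k + k).+4 - 2 * k.+2 = 0)%N by lia.
have -> : (m + (k + k).+4 - k.+2 - 1 = (m + k).+1)%N by lia.
have -> : (m + (k + k).+4 - 1 = (m + k + k).+3)%N by lia.
have -> : ((k + k).+4 + m - k.+2 = (m + k).+2)%N by lia.
have -> : ((k + k).+3 - 2 * 1 = (k + k).+1)%N by lia.
have -> : (m + (k + k).+3 - 1 = (m + k + k).+2)%N by lia.
have -> : ((k + k).+3 + m - 1 = (m + k + k).+2)%N by lia.
have -> : ((k + k).+4 - 2 * 1 = (k + k).+2)%N by lia.
have -> : ((k + k).+4 + m - 1 = (m + k + k).+3)%N by lia.
have -> : ((k + k).+2 - 2 * k.+1 = 0)%N by lia.
have -> : (m + (k + k).+2 - k.+1 - 1 = m + k)%N by lia.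
have -> : (m + (k + k).+2 - 1 = (m + k + k).+1)%N by lia.
have -> : ((k + k).+2 + m - k.+1 = (m + k).+1)%N by lia.
rewrite !qfactS qfact0 qint1 !qpoch1.
rewrite (qpochNS _ _ (m + k).+1) !qpochNSr !qpochS.
have q1 := @qneq1 _ _ hq.
have qiE : forall j, qint q j = (1 - q ^+ j) / (1 - q) := fun j => @qintE _ q j q1.
rewrite !qiE.
have -> : (k.+2 * k.+2 = k * k + k + k + k + k + 4)%N by lia.
have -> : (k.+1 * k.+1 = k * k + k + k + 1)%N by lia.
rewrite !mul1n; rewrite ?(exprS, exprD, expr0, expr1).
set y := q ^+ k; set z := q ^+ m; set w := q ^+ (k * k); set S := (- s) ^+ k.
field.
rewrite /y /z.
repeat (apply/andP; split); nzq hq.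
Qed.
Lemma C1 (F : fieldType) (q : F) (hq : forall j : nat, (0 < j)%N -> q ^+ j != 1) m s p j :
  Cc q m s (p + j + j).+3 j.+1 =
  Cc q m s (p + j + j).+2 j.+1 + Cc q m s (p + j + j).+2 j * lam q m s p.+2.
Proof.
rewrite /lam.
do 3 (rewrite CcE; last lia).
do 2 (rewrite AvE; last lia).
rewrite /coefc /coefv.
have -> : (m + p.+2 - 1 - 1 = m + p)%N by lia.
have -> : (m + p.+3 - 1 - 1 = (m + p).+1)%N by lia.
have -> : ((p + j + j).+3 - 2 * j.+1 = p.+1)%N by lia.
have -> : ((p + j + j).+3 + m - 2 * j.+1 = (m + p).+1)%N by lia.
have -> : ((p + j + j).+3 + m - j.+1 = (m + p + j).+2)%N by lia.
have -> : ((p + j + j).+3 + m + 1 - 2 * j.+1 = (m + p).+2)%N by lia.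
have -> : ((p + j + j).+2 - 2 * j.+1 = p)%N by lia.
have -> : ((p + j + j).+2 + m - 2 * j.+1 = m + p)%N by lia.
have -> : ((p + j + j).+2 + m - j.+1 = (m + p + j).+1)%N by lia.
have -> : ((p + j + j).+2 + m + 1 - 2 * j.+1 = (m + p).+1)%N by lia.
have -> : ((p + j + j).+2 - 2 * j = p.+2)%N by lia.
have -> : ((p + j + j).+2 + m - 2 * j = (m + p).+2)%N by lia.
have -> : ((p + j + j).+2 + m - j = (m + p + j).+2)%N by lia.
have -> : ((p + j + j).+2 + m + 1 - 2 * j = (m + p).+3)%N by lia.
have -> : (p.+2 - 2 * 1 = p)%N by lia.
have -> : (m + p.+2 - 1 = (m + p).+1)%N by lia.
have -> : (p.+2 + m - 1 = (m + p).+1)%N by lia.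
have -> : (p.+3 - 2 * 1 = p.+1)%N by lia.
have -> : (m + p.+3 - 1 = (m + p).+2)%N by lia.
have -> : (p.+3 + m - 1 = (m + p).+2)%N by lia.
rewrite !qfactS qfact0 qint1 !qpoch1.
rewrite (qpochNS _ _ (m + p).+2) (qpochNS _ _ (m + p).+1).
rewrite (@qpochN_shift F q hq (m + p).+2 j) // !qpochS.
have q1 := @qneq1 _ _ hq.
have qiE : forall j, qint q j = (1 - q ^+ j) / (1 - q) := fun j => @qintE _ q j q1.
rewrite !qiE.
rewrite !mul1n; rewrite ?(exprS, exprD, expr0, expr1).
set x := q ^+ p; set y := q ^+ j; set z := q ^+ m; set S := s ^+ j.
field.
rewrite /x /y /z.
repeat (apply/andP; split); nzq hq.
Qed.
Lemma C2 (F : fieldType) (q : F) (hq : forall j : nat, (0 < j)%N -> q ^+ j != 1) m s j :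
  Cc q m s (j + j).+2 j.+1 = Cc q m s (j + j).+1 j * lam q m s 1.
Proof.
rewrite /lam (@Av0 F q m s 1 1 isT) sub0r.
do 2 (rewrite CcE; last lia).
rewrite AvE; last lia.
rewrite /coefc /coefv.
have -> : (m + 2 - 1 - 1 = m)%N by lia.
have -> : ((j + j).+2 - 2 * j.+1 = 0)%N by lia.
have -> : ((j + j).+2 + m - 2 * j.+1 = m)%N by lia.
have -> : ((j + j).+2 + m - j.+1 = (m + j).+1)%N by lia.
have -> : ((j + j).+2 + m + 1 - 2 * j.+1 = m.+1)%N by lia.
have -> : ((j + j).+1 - 2 * j = 1)%N by lia.
have -> : ((j + j).+1 + m - 2 * j = m.+1)%N by lia.
have -> : ((j + j).+1 + m - j = (m + j).+1)%N by lia.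
have -> : ((j + j).+1 + m + 1 - 2 * j = m.+2)%N by lia.
have -> : (2 - 2 * 1 = 0)%N by lia.
have -> : (m + 2 - 1 = m.+1)%N by lia.
have -> : (2 + m - 1 = m.+1)%N by lia.
rewrite !qfactS qfact0 qint1 !qpoch1.
rewrite (qpochNS _ _ m.+1) !qpochS.
have q1 := @qneq1 _ _ hq.
have qiE : forall j, qint q j = (1 - q ^+ j) / (1 - q) := fun j => @qintE _ q j q1.
rewrite !qiE.
rewrite !mul1n; rewrite ?(exprS, exprD, expr0, expr1).
set y := q ^+ j; set z := q ^+ m; set S := s ^+ j.
field.
rewrite /y /z.
repeat (apply/andP; split); nzq hq.
Qed.
Lemma coefv_0 (F : fieldType) (q : F) (hq : forall j : nat, (0 < j)%N -> q ^+ j != 1) m s N :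
  coefv q m s N.+1 0 = 1.
Proof.
rewrite /coefv !subn0 expr0 mul1r muln0 expr0 mul1r qfact0 mul1r !qpoch0 mulr1 invr1 mulr1.
by rewrite !divff ?mulr1 //; apply: (@qfact_neq0 _ _ hq).
Qed.
Lemma coefc_0 (F : fieldType) (q : F) (hq : forall j : nat, (0 < j)%N -> q ^+ j != 1) m s N :
  coefc q m s N 0 = 1.
Proof.
rewrite /coefc !subn0 !expr0 mul1r qfact0 mul1r !qpoch0 mulr1 invr1 mulr1.
by rewrite !divff ?mulr1 //; apply: (@qfact_neq0 _ _ hq).
Qed.

Lemma vpolyE (F : fieldType) (q : F) m s N B : (N./2 < B)%N ->
  vpoly q m s N = \sum_(k < B) Av q m s N k *: 'X^(N - 2 * k).
Proof.
case: N => [|N] hB.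
  case: B hB => [//|B] _.
  rewrite big_ord_recl big1 ?addr0 => [|i _]; last by rewrite Av0 ?scale0r.
  by rewrite /= /Av /= scale1r expr0.
rewrite /vpoly (big_ord_widen _ (fun k => coefv q m s N.+1 k *: 'X^(N.+1 - 2 * k)) hB).
rewrite big_mkcond; apply: eq_bigr => i _.
case: ifP => hi; first by rewrite AvE //; lia.
by rewrite Av0 ?scale0r //; lia.
Qed.

Lemma Xv0 (F : fieldType) (q : F) (hq : forall j : nat, (0 < j)%N -> q ^+ j != 1) m s :
  'X * vpoly q m s 0 = vpoly q m s 1.
Proof.
rewrite (@vpolyE _ q m s 1 1) // big_ord1 AvE // (coefv_0 hq) scale1r subn0 expr1.
by rewrite /vpoly mulr1.
Qed.

Lemma Xvrec (F : fieldType) (q : F) (hq : forall j : nat, (0 < j)%N -> q ^+ j != 1) m s n :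
  'X * vpoly q m s n.+1 = vpoly q m s n.+2 + lam q m s n.+1 *: vpoly q m s n.
Proof.
rewrite (@vpolyE _ q m s n.+1 n.+3) ?(@vpolyE _ q m s n.+2 n.+3) ?(@vpolyE _ q m s n n.+2); try lia.
rewrite scaler_sumr.
have -> : \sum_(i < n.+2) lam q m s n.+1 *: (Av q m s n i *: 'X^(n - 2 * i)) =
  \sum_(k < n.+3) (if (k : nat) is k'.+1 then lam q m s n.+1 * Av q m s n k' else 0)
      *: 'X^(n.+2 - 2 * k).
  symmetry; rewrite big_ord_recl /= scale0r add0r; apply: eq_bigr => i _.
  rewrite add0n scalerA /bump leq0n /=; congr (_ *: 'X^_); lia.
rewrite mulr_sumr -big_split; apply: eq_bigr => [[k hk]] _ /=.
rewrite -scalerAr -exprS -scalerDl.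
case: (leqP (2 * k) n.+1) => h2.
  have -> : (n.+1 - 2 * k).+1 = (n.+2 - 2 * k)%N by lia.
  congr (_ *: _).
  case: k hk h2 => [|k] hk h2.
    by rewrite addr0 !AvE // !(coefv_0 hq).
  have [p hp] : exists p, n = (p + k + k).+1 by exists (n - (2 * k).+1)%N; lia.
  subst n; exact: (R1 hq).
rewrite Av0 // scale0r.
case: k hk h2 => [|k] hk h2; first lia.
case: (ltngtP (2 * k.+1) n.+2) => h3; first lia.
  rewrite Av0 // (@Av0 _ q m s n k) ?mulr0 ?addr0 ?scale0r //; lia.
case: k hk h2 h3 => [|k] hk h2 h3.
  have -> : n = 0%N by lia.
  rewrite /lam (@Av0 _ q m s 1 1) //= /Av /= mulr1 sub0r addrN scale0r //.
have hn : n = (k + k).+2 by lia.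
subst n; by rewrite (R2 hq) scale0r.
Qed.
Definition Dc (F : fieldType) (q : F) (m : nat) (s : F) (n j : nat) : F :=
  if (2 * j < n)%N then Cc q m s n j * lam q m s (n - 2 * j) else 0.

Lemma Cstep (F : fieldType) (q : F) (hq : forall j : nat, (0 < j)%N -> q ^+ j != 1) m s n j :
  Cc q m s n.+1 j = Cc q m s n j + (if j is j'.+1 then Dc q m s n j' else 0).
Proof.
case: j => [|j].
  by rewrite !CcE // !(coefc_0 hq) addr0.
rewrite /Dc.
case: (leqP (2 * j.+1) n) => h.
  rewrite ifT; last lia.
  have [p hp] : exists p, n = (p + j + j).+2 by exists (n - (2 * j).+2)%N; lia.
  subst n; rewrite (C1 hq).
  by have -> : ((p + j + j).+2 - 2 * j = p.+2)%N by lia.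
case: (ltngtP (2 * j.+1) n.+1) => h2; first lia.
  rewrite Cc0; last lia. rewrite Cc0; last lia.
  by rewrite add0r ifF //; apply/negbTE; rewrite -leqNgt; lia.
have hn : n = (j + j).+1 by lia.
subst n; rewrite (Cc0 _ _ _ (N := (j + j).+1)) ?add0r; last lia.
rewrite ifT; last lia.
have -> : ((j + j).+1 - 2 * j = 1)%N by lia.
exact: (C2 hq).
Qed.

Lemma Xv_step (F : fieldType) (q : F) (hq : forall j : nat, (0 < j)%N -> q ^+ j != 1) m s n j :
  Cc q m s n j *: ('X * vpoly q m s (n - 2 * j)) =
  Cc q m s n j *: vpoly q m s (n.+1 - 2 * j) + Dc q m s n j *: vpoly q m s (n - 2 * j).-1.
Proof.
rewrite /Dc; case: (ltngtP (2 * j) n) => h.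
- have [r hr] : exists r, (n - 2 * j = r.+1)%N by exists (n - 2 * j).-1; lia.
  rewrite hr (Xvrec hq) scalerDr scalerA.
  by have -> : (n.+1 - 2 * j = r.+2)%N by lia.
- by rewrite Cc0 // !scale0r addr0.
- rewrite h subnn (Xv0 hq) scale0r addr0.
  by have -> : (n.+1 - n = 1)%N by lia.
Qed.

Lemma inversion (F : fieldType) (q : F) (hq : forall j : nat, (0 < j)%N -> q ^+ j != 1) m s n :
  'X^n = \sum_(j < n.+1) Cc q m s n j *: vpoly q m s (n - 2 * j).
Proof.
elim: n => [|n IH].
  by rewrite big_ord1 CcE // (coefc_0 hq) scale1r /vpoly expr0.
rewrite exprS IH mulr_sumr.
under eq_bigr => j _ do rewrite -scalerAr (Xv_step hq).
rewrite big_split /=.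
have -> : \sum_(j < n.+2) Cc q m s n.+1 j *: vpoly q m s (n.+1 - 2 * j) =
  \sum_(j < n.+2) Cc q m s n j *: vpoly q m s (n.+1 - 2 * j) +
  \sum_(j < n.+2) (if (j : nat) is j'.+1 then Dc q m s n j' else 0) *: vpoly q m s (n.+1 - 2 * j).
  by rewrite -big_split; apply: eq_bigr => j _; rewrite (Cstep hq) scalerDl.
congr (_ + _).
  by rewrite [RHS]big_ord_recr /= Cc0 ?scale0r ?addr0 //; lia.
rewrite [RHS]big_ord_recl /= scale0r add0r; apply: eq_bigr => i _.
rewrite /bump leq0n /= add1n.
by have -> : (n.+1 - 2 * i.+1 = (n - 2 * i).-1)%N by lia.
Qed.
Unset Implicit Arguments.

Theorem mainTheorem13 (F : fieldType) (q : F)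
    (hq : forall j : nat, (0 < j)%N -> q ^+ j != 1) (m : nat) :
  (forall (s : F) (n : nat),
     'X ^+ n =
     \sum_(k < n./2.+1)
       ((qfact q n / (qfact q k * qfact q (n - 2 * k)))
        * (qfact q (n + m - 2 * k) / qfact q (n + m - k))
        * (q ^+ k * s ^+ k
           / (qpoch q (- q) k * qpoch q (- q ^+ (n + m + 1 - 2 * k)) k)))
       *: vpoly q m s (n - 2 * k))
  /\
  (forall Phi : {poly F} -> F,
     (forall p r : {poly F}, Phi (p + r) = Phi p + Phi r) ->
     (forall (c : F) (p : {poly F}), Phi (c *: p) = c * Phi p) ->
     (forall n : nat, Phi (vpoly q m 1 n) = (n == 0%N)%:R) ->
     forall n : nat,
       Phi ('X ^+ (2 * n).+1) = 0 /\
       Phi ('X ^+ (2 * n)) =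
         q ^+ n / (qpoch q (- q) n * qpoch q (- q ^+ m.+1) n)
         * (qfact q (2 * n) * qfact q m / (qfact q n * qfact q (m + n)))).
Proof.
split.
  move=> s n; rewrite {1}(inversion hq m s n).
  have hle : (n./2.+1 <= n.+1)%N by lia.
  rewrite [RHS](big_ord_widen n.+1 (fun k => coefc q m s n k *: vpoly q m s (n - 2 * k)) hle).
  rewrite [RHS]big_mkcond; apply: eq_bigr => i _.
  case: ifP => hi; first by rewrite CcE //; lia.
  by rewrite Cc0 ?scale0r //; lia.
move=> Phi Hadd Hscale Hv n.
have Phi0 : Phi 0 = 0.
  have h := Hadd 0 0; rewrite addr0 in h.
  by apply: (addrI (Phi 0)); rewrite -h addr0.
have Psum : forall N (f : 'I_N -> {poly F}), Phi (\sum_(i < N) f i) = \sum_(i < N) Phi (f i).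
  move=> N f; apply: (big_rec2 (fun a b => Phi b = a)) => [|i a b _ <-]; first exact: Phi0.
  exact: Hadd.
have key : forall N, Phi ('X^N) = \sum_(j < N.+1) Cc q m 1 N j * (N - 2 * j == 0)%N%:R.
  by move=> N; rewrite (inversion hq m 1 N) Psum; apply: eq_bigr => j _; rewrite Hscale Hv.
split.
  rewrite key big1 // => j _.
  case: (leqP (2 * j) (2 * n).+1) => h.
    have -> : ((2 * n).+1 - 2 * j == 0)%N = false by apply/negP => /eqP; lia.
    by rewrite mulr0.
  by rewrite Cc0 ?mul0r.
have hn : (n < (2 * n).+1)%N by lia.
rewrite key (bigD1 (Ordinal hn)) //= big1 ?addr0.
  rewrite subnn eqxx mulr1 CcE // /coefc.
  have -> : (2 * n - 2 * n = 0)%N by lia.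
  have -> : (2 * n + m - 2 * n = m)%N by lia.
  have -> : (2 * n + m - n = m + n)%N by lia.
  have -> : (2 * n + m + 1 - 2 * n = m.+1)%N by lia.
  rewrite qfact0 expr1n mulr1.
  field.
  repeat (apply/andP; split); nzq hq.
move=> j hj.
case: (ltngtP (2 * j) (2 * n)) => h.
- have -> : (2 * n - 2 * j == 0)%N = false by apply/negP => /eqP; lia.
  by rewrite mulr0.
- by rewrite Cc0 ?mul0r.
- exfalso; move: hj => /eqP; apply; apply: val_inj => /=; lia.
Qed.
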